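(* With the notation of the context, for every $r\in(0,1)$ and $v=(v_1,v_2)\in\mathbb{R}^2$, $$T^Q\big(\rho(r,0),\rho(r+v_1t,v_2t)\big)=G(r,v)\,t^2+O(t^3)\quad\text{as }t\downarrow0,$$ where $$G(r,v)=\max_{\phi\in[0,2\pi)}\frac{\big(2v_1\cos\phi-(2r-1)v_2\sin\phi\big)^2}{16\big(1+(2r-1)\cos\phi\big)}.$$
   Context: For $r\in[0,1]$ and $\theta\in\mathbb{R}$, $\rho(r,\theta)=\tfrac12[\mathbb{1}+(2r-1)(\sigma_1\sin\theta+\sigma_3\cos\theta)]$, with $\sigma_i$ the Pauli matrices. Let $C^Q=\tfrac12(\mathbb{1}-S)$ with $S$ the swap on $\mathbb{C}^2\otimes\mathbb{C}^2$. Define $T^Q(\rho^A,\rho^B)=\min\operatorname{Tr}(C^Q\rho^{AB})$, the minimum taken over density matrices $\rho^{AB}$ on $\mathbb{C}^2\otimes\mathbb{C}^2$ with marginals $\operatorname{Tr}_B\rho^{AB}=\rho^A$ and $\operatorname{Tr}_A\rho^{AB}=\rho^B$. Known formula (assumed): $T^Q(\rho(s,0),\rho(r,\theta))=\max_{\phi\in[0,2\pi)}\tfrac14\big(\sqrt{1+(2s-1)\cos\phi}-\sqrt{1+(2r-1)\cos(\theta+\phi)}\big)^2$. *)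

(* Defs.v *)
From HB Require Import structures.
From mathcomp Require Import all_boot all_order all_algebra.
From mathcomp Require Import all_classical all_reals all_analysis.
Set Implicit Arguments. Unset Strict Implicit. Unset Printing Implicit Defensive.
Import Order.TTheory GRing.Theory Num.Theory.
Local Open Scope classical_set_scope.
Local Open Scope ring_scope.

(* T^Q(rho(s,0), rho(r,theta)), given by the known (assumed) formula of the
   context: max over phi in [0, 2 pi) of
   1/4 (sqrt(1+(2s-1)cos phi) - sqrt(1+(2r-1)cos(theta+phi)))^2.
   The max is written as the supremum of the (compact, attained) image. *)
Definition TQ (R : realType) (s r theta : R) : R :=
  sup [set (Num.sqrt (1 + (2 * s - 1) * cos phi)
            - Num.sqrt (1 + (2 * r - 1) * cos (theta + phi))) ^+ 2 / 4
      | phi in `[0, 2 * pi[%classic].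

Definition Gfun (R : realType) (r v1 v2 : R) : R :=
  sup [set (2 * v1 * cos phi - (2 * r - 1) * v2 * sin phi) ^+ 2
            / (16 * (1 + (2 * r - 1) * cos phi))
      | phi in `[0, 2 * pi[%classic].

(* Main.v *)
Require Import Defs.
From HB Require Import structures.
From mathcomp Require Import all_boot all_order all_algebra.
From mathcomp Require Import all_classical all_reals all_analysis.
From mathcomp Require Import ring lra.
Import Order.TTheory GRing.Theory Num.Theory.
Local Open Scope classical_set_scope.
Local Open Scope ring_scope.

Section S.
Variable R : realType.

Lemma mvt_abs (f df : R -> R) (M x : R) :
  (forall y : R, is_derive y (1:R) f (df y)) ->
  (forall c, `|c| <= `|x| -> `|df c| <= M) ->
  `|f x - f 0| <= M * `|x|.
Proof.
move=> hd hM.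
have cf := fun (i : interval R) => @derivable_within_continuous R R f i (fun y _ => @ex_derive _ _ _ _ _ _ _ (hd y)).
have [x0|x0] := leP 0 x.
  have [c + ->] := MVT_segment x0 (fun y _ => hd y) (cf `[0, x]).
  rewrite in_itv /= => /andP[c0 cx].
  rewrite subr0 normrM (ger0_norm x0); apply: ler_wpM2r => //.
  by apply: hM; rewrite (ger0_norm x0) ger0_norm.
have x0' : x <= 0 by exact: ltW.
have [c + E] := MVT_segment x0' (fun y _ => hd y) (cf `[x, 0]).
rewrite in_itv /= => /andP[xc c0].
rewrite distrC E sub0r normrM normrN (ler0_norm x0'); apply: ler_wpM2r.
  by rewrite oppr_ge0.
by apply: hM; rewrite (ler0_norm x0') ler0_norm // lerN2.
Qed.

Lemma abs_sin (x : R) : `|sin x| <= `|x|.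
Proof.
have := @mvt_abs sin cos 1 x (fun y => is_derive_sin y).
rewrite sin0 subr0 mul1r; apply => c _; exact: cos_max.
Qed.

Lemma abs_cos1 (x : R) : `|cos x - 1| <= `|x| * `|x|.
Proof.
have := @mvt_abs cos (fun y => - sin y) `|x| x (fun y => is_derive_cos y).
rewrite cos0; apply => c hc; rewrite normrN; exact: le_trans (abs_sin c) hc.
Qed.

Lemma abs_sinx (x : R) : `|sin x - x| <= `|x| * `|x| * `|x|.
Proof.
have hd : forall y : R, is_derive y (1:R) (fun y => sin y - y) (cos y - 1).
  move=> y; apply: is_deriveB.
have := @mvt_abs (fun y => sin y - y) (fun y => cos y - 1) (`|x| * `|x|) x hd.
rewrite sin0 subr0 subr0; apply => c hc; apply: le_trans (abs_cos1 c) _.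
by apply: ler_pM => //.
Qed.

Lemma core (x y D L e d m : R) : 0 < m -> m <= x ^+ 2 -> 0 <= x -> 0 <= y ->
  D = y ^+ 2 - x ^+ 2 -> `|D - L| <= e -> `|D| <= d ->
  `|(x - y) ^+ 2 / 4 - L ^+ 2 / (16 * x ^+ 2)|
     <= (e + d ^+ 2 / m) * (2 * d + `|L|) / (16 * m).
Proof.
move=> m0 mx x0 y0 hD hDL hd.
have hx : 0 < x.
  rewrite lt_neqAle x0 andbT; apply/eqP => x0'; move: mx; rewrite -x0' expr0n /=.
  by rewrite leNgt m0.
set w := y - x.
have E : (x - y) ^+ 2 / 4 - L ^+ 2 / (16 * x ^+ 2)
    = ((D - L) - w ^+ 2) * (2 * x * w + L) / (16 * x ^+ 2).
  by rewrite hD /w; field; rewrite gt_eqF.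
have hwx : `|w| * x <= `|D|.
  have -> : D = w * (y + x) by rewrite hD /w; ring.
  rewrite normrM (ger0_norm (addr_ge0 y0 x0)); apply: ler_wpM2l => //.
  by rewrite lerDr.
have d0 : 0 <= d := le_trans (normr_ge0 _) hd.
have hw2 : w ^+ 2 <= d ^+ 2 / m.
  rewrite ler_pdivlMr //.
  apply: le_trans (_ : w ^+ 2 * x ^+ 2 <= _); first by rewrite ler_wpM2l // sqr_ge0.
  have h1 : `|w| * x <= d := le_trans hwx hd.
  have h2 : (`|w| * x) ^+ 2 <= d ^+ 2.
    by rewrite ler_pXn2r // nnegrE mulr_ge0.
  by rewrite exprMn (real_normK (num_real w)) in h2.
rewrite E normrM normfV normrM (ger0_norm (_ : 0 <= 16 * x ^+ 2)); last first.
  by rewrite mulr_ge0 // sqr_ge0.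
apply: le_trans (_ : `|D - L - w ^+ 2| * `|2 * x * w + L| / (16 * m) <= _).
  rewrite ler_wpM2l ?mulr_ge0 //.
  by rewrite lef_pV2 ?posrE ?mulr_gt0 // ler_wpM2l.
apply: ler_pM; first by rewrite mulr_ge0.
  by rewrite invr_ge0 mulr_ge0 // ltW.
apply: ler_pM => //.
  apply: le_trans (ler_normB _ _) _; rewrite lerD //.
  by rewrite ger0_norm ?sqr_ge0.
apply: le_trans (ler_normD _ _) _; rewrite lerD2r normrM.
  rewrite normrM (ger0_norm (_ : (0:R) <= 2)) // (ger0_norm x0) -mulrA.
  by rewrite ler_wpM2l // mulrC; apply: le_trans hwx hd.
by [].
Qed.

Lemma sup_close (S : set R) (F H : R -> R) (k eps M : R) :
  S !=set0 -> 0 < k -> (forall p, S p -> H p <= M) ->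
  (forall p, S p -> `|F p - k * H p| <= eps) ->
  `|sup [set F p | p in S] - k * sup [set H p | p in S]| <= eps.
Proof.
move=> [p0 Sp0] k0 hM hFH.
have hsH : has_sup [set H p | p in S].
  split; first by exists (H p0), p0.
  by exists M => _ [p Sp <-]; exact: hM.
have ubH := sup_upper_bound hsH.
have hle : forall p, S p -> F p <= k * H p + eps.
  by move=> p Sp; have := hFH p Sp; rewrite ler_norml => /andP[h1 h2]; lra.
have hge : forall p, S p -> k * H p - eps <= F p.
  by move=> p Sp; have := hFH p Sp; rewrite ler_norml => /andP[h1 h2]; lra.
have hsF : has_sup [set F p | p in S].
  split; first by exists (F p0), p0.
  exists (k * M + eps) => _ [p Sp <-]; apply: le_trans (hle p Sp) _.
  by rewrite lerD2r; apply: ler_wpM2l; [exact: ltW | exact: hM].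
have ubF := sup_upper_bound hsF.
rewrite ler_norml; apply/andP; split.
  suff : sup [set H p | p in S] <= (sup [set F p | p in S] + eps) / k.
    by rewrite ler_pdivlMr // => h; lra.
  apply: ge_sup; first by exists (H p0), p0.
  move=> _ [p Sp <-]; rewrite ler_pdivlMr //.
  have h1 := hge p Sp; have h2 : F p <= sup [set F p | p in S] by apply: ubF; exists p.
  lra.
suff : sup [set F p | p in S] <= k * sup [set H p | p in S] + eps by move=> h; lra.
apply: ge_sup; first by exists (F p0), p0.
move=> _ [p Sp <-]; apply: le_trans (hle p Sp) _.
by rewrite lerD2r; apply: ler_wpM2l; [exact: ltW | apply: ubH; exists p].
Qed.

Lemma le_prod3 (x y z X Y Z : R) : 0 <= x -> 0 <= y -> 0 <= z ->
  x <= X -> y <= Y -> z <= Z -> x * y * z <= X * Y * Z.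
Proof.
move=> x0 y0 z0 xX yY zZ; apply: ler_pM => //; first exact: mulr_ge0.
exact: ler_pM.
Qed.

Lemma lin2 (c sn p q : R) : `|c| <= 1 -> `|sn| <= 1 ->
  `|c * p - sn * q| <= `|p| + `|q|.
Proof.
move=> hc hs; apply: le_trans (ler_normB _ _) _; rewrite !normrM.
by apply: lerD; rewrite -[X in _ <= X]mul1r ler_wpM2r.
Qed.

Lemma mainlemma (r v1 v2 : R) :
  0 < r < 1 ->
  exists C : R, exists delta : R, 0 < delta /\
    forall t : R, 0 < t < delta ->
      `| TQ r (r + v1 * t) (v2 * t) - Gfun r v1 v2 * t ^+ 2 | <= C * t ^+ 3.
Proof.
move=> /andP[r0 r1].
pose a := 2 * r - 1.
have ha : `|a| < 1 by rewrite ltr_norml /a; apply/andP; split; lra.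
pose V := `|v1| + `|v2| + 1.
have V1 : 1 <= V by rewrite /V; have := normr_ge0 v1; have := normr_ge0 v2; lra.
have hv1 : `|v1| <= V by rewrite /V; have := normr_ge0 v2; lra.
have hv2 : `|v2| <= V by rewrite /V; have := normr_ge0 v1; lra.
pose m := 1 - `|a|.
have m0 : 0 < m by rewrite /m; lra.
have Age : forall c, `|c| <= 1 -> m <= 1 + (2 * r - 1) * c.
  move=> c hc.
  have hac : `|a * c| <= `|a| by rewrite normrM -[X in _ <= X]mulr1 ler_wpM2l.
  by move: hac; rewrite ler_norml /m /a => /andP[h _]; lra.
have gabs : forall c sn, `|c| <= 1 -> `|sn| <= 1 ->
    `|2 * v1 * c - (2 * r - 1) * v2 * sn| <= 3 * V.
  move=> c sn hc hsn.
    apply: le_trans (ler_normB _ _) _; rewrite !normrM.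
    have h2 : `|2 : R| = 2 by rewrite ger0_norm.
    rewrite h2.
    have e1 : 2 * `|v1| * `|c| <= 2 * V * 1 by apply: le_prod3.
    have e2 : `|2 * r - 1| * `|v2| * `|sn| <= 1 * V * 1.
      by apply: le_prod3 => //; rewrite -/a; exact: ltW.
    lra.
have gle : forall c sn, `|c| <= 1 -> `|sn| <= 1 ->
    (2 * v1 * c - (2 * r - 1) * v2 * sn) ^+ 2 <= 9 * V ^+ 2.
  move=> c sn hc hsn; have h := gabs c sn hc hsn.
  rewrite -real_normK ?num_real //.
  have -> : 9 * V ^+ 2 = (3 * V) ^+ 2 by rewrite exprMn; congr (_ * _); rewrite expr2; lra.
  by rewrite ler_pXn2r // nnegrE //; lra.
pose C := (6 * V ^+ 3 + (9 * V ^+ 3) ^+ 2 / m) * (21 * V ^+ 3) / (16 * m).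
exists C, (Num.min 1 (m / (2 * V))); split.
  rewrite lt_min ltr01 /=; apply: divr_gt0 => //; lra.
move=> t /andP[t0]; rewrite lt_min => /andP[t1 tm].
have Vt : 2 * V * t < m by rewrite mulrC -ltr_pdivlMr; [ | lra].
rewrite /TQ /Gfun [X in _ - X]mulrC.
refine (@sup_close `[0, 2 * pi[%classic
  (fun phi => (Num.sqrt (1 + (2 * r - 1) * cos phi)
            - Num.sqrt (1 + (2 * (r + v1 * t) - 1) * cos (v2 * t + phi))) ^+ 2 / 4)
  (fun phi => (2 * v1 * cos phi - (2 * r - 1) * v2 * sin phi) ^+ 2
            / (16 * (1 + (2 * r - 1) * cos phi))) (t ^+ 2) (C * t ^+ 3) (9 * V ^+ 2 / (16 * m)) _ _ _ _).
- exists 0; rewrite /= in_itv /= lexx /=; apply: mulr_gt0 => //; exact: pi_gt0.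
- by apply: exprn_gt0.
- move=> phi _.
  have hA := Age _ (cos_max phi).
  have hg := gle _ _ (cos_max phi) (sin_max phi).
  apply: ler_pM.
  + exact: sqr_ge0.
  + by rewrite invr_ge0 mulr_ge0 //; lra.
  + by [].
  + rewrite lef_pV2 ?posrE ?mulr_gt0 //; lra.
move=> phi _ /=.
have hc := cos_max phi; have hsn := sin_max phi.
have hA := Age _ hc.
have hu : cos (v2 * t + phi) = cos (v2 * t) * cos phi - sin (v2 * t) * sin phi.
  by rewrite cosD.
have hs : `|v2 * t| <= V * t by rewrite normrM (gtr0_norm t0) ler_wpM2r // ltW.
have Vt0 : 0 <= V * t by rewrite mulr_ge0 //; lra.
have hB : 0 <= 1 + (2 * (r + v1 * t) - 1) * cos (v2 * t + phi).
  have h1 : `|2 * (r + v1 * t) - 1| <= `|a| + 2 * V * t.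
    have -> : 2 * (r + v1 * t) - 1 = a + 2 * v1 * t by rewrite /a; ring.
    apply: le_trans (ler_normD _ _) _; rewrite lerD2l !normrM.
    rewrite (gtr0_norm t0) (ger0_norm (_ : (0:R) <= 2)) //.
    by apply: ler_wpM2r; [exact: ltW | exact: ler_wpM2l].
  have h2 : `|(2 * (r + v1 * t) - 1) * cos (v2 * t + phi)| <= `|a| + 2 * V * t.
    rewrite normrM -[X in _ <= X]mulr1; apply: ler_pM => //; exact: cos_max.
  by move: h2; rewrite ler_norml => /andP[h3 _]; rewrite /m in Vt; lra.
set A := 1 + (2 * r - 1) * cos phi in hA *.
set B := 1 + (2 * (r + v1 * t) - 1) * cos (v2 * t + phi) in hB *.
set g := 2 * v1 * cos phi - (2 * r - 1) * v2 * sin phi.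
have hg : `|g| <= 3 * V := gabs _ _ hc hsn.
have hL : `|t * g| <= 3 * V * t.
  by rewrite normrM (gtr0_norm t0) mulrC ler_wpM2r // ltW.
have hxA : Num.sqrt A ^+ 2 = A by rewrite sqr_sqrtr //; lra.
have hyB : Num.sqrt B ^+ 2 = B by rewrite sqr_sqrtr.
have V3 : V <= V ^+ 3.
  by rewrite -[X in X <= _]mulr1 exprSr mulrC ler_wpM2r ?exprn_ege1 //; lra.
have t2 : t ^+ 3 <= t ^+ 2.
  by rewrite exprSr -[X in _ <= X]mulr1 ler_wpM2l ?exprn_ge0 // ?ltW.
have hDL : `|B - A - t * g| <= 6 * V ^+ 3 * t ^+ 2.
  set p := cos (v2 * t) - 1.
  set q := sin (v2 * t) - v2 * t.
  have eDL : B - A - t * g = a * (cos phi * p - sin phi * q)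
      + (2 * v1 * t) * (cos phi * p - sin phi * sin (v2 * t)).
    by rewrite /B /A /g hu /p /q /a; ring.
  have hp : `|p| <= V * t * (V * t).
    apply: le_trans (abs_cos1 _) _; apply: ler_pM => //.
  have hq : `|q| <= V * t * (V * t) * (V * t).
    apply: le_trans (abs_sinx _) _; apply: le_prod3 => //.
  have hss : `|sin (v2 * t)| <= V * t := le_trans (abs_sin _) hs.
  have X1 := lin2 _ _ p q hc hsn.
  have X2 := lin2 _ _ p (sin (v2 * t)) hc hsn.
  have h2v : `|2 * v1 * t| <= 2 * V * t.
    rewrite !normrM (gtr0_norm t0) (ger0_norm (_ : (0:R) <= 2)) //.
    by apply: ler_wpM2r; [exact: ltW | exact: ler_wpM2l].
  rewrite eDL; apply: le_trans (ler_normD _ _) _; rewrite (normrM a) (normrM (2 * v1 * t)).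
  have e1 : `|a| * `|cos phi * p - sin phi * q| <= 1 * (`|p| + `|q|).
    by apply: ler_pM => //; exact: ltW.
  have e2 : `|2 * v1 * t| * `|cos phi * p - sin phi * sin (v2 * t)|
      <= 2 * V * t * (`|p| + `|sin (v2 * t)|) by apply: ler_pM.
  have e3 : 2 * V * t * (`|p| + `|sin (v2 * t)|)
      <= 2 * V * t * (V * t * (V * t) + V * t).
    by apply: ler_wpM2l; [rewrite !mulr_ge0 //; lra | exact: lerD].
  have f1 : V ^+ 2 * t ^+ 2 <= V ^+ 3 * t ^+ 2.
    apply: ler_wpM2r; first exact: exprn_ge0 (ltW t0).
    nra.
  have f2 : V ^+ 3 * t ^+ 3 <= V ^+ 3 * t ^+ 2.
    by apply: ler_wpM2l => //; apply: exprn_ge0; lra.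
  have f3 : V * t * (V * t) = V ^+ 2 * t ^+ 2 by ring.
  have f4 : V * t * (V * t) * (V * t) = V ^+ 3 * t ^+ 3 by ring.
  have f5 : 2 * V * t * (V * t * (V * t) + V * t) = 2 * (V ^+ 3 * t ^+ 3) + 2 * (V ^+ 2 * t ^+ 2) by ring.
  rewrite f3 in hp; rewrite f4 in hq; rewrite f5 in e3.
  lra.
have hD : `|B - A| <= 9 * V ^+ 3 * t.
  have -> : B - A = (B - A - t * g) + t * g by ring.
  apply: le_trans (ler_normD _ _) _.
  have f1 : 6 * V ^+ 3 * t ^+ 2 <= 6 * V ^+ 3 * t.
    apply: ler_wpM2l; first by rewrite mulr_ge0 // exprn_ge0 //; lra.
    by rewrite expr2 -[X in _ <= X]mulr1 ler_wpM2l ?ltW.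
  have f2 : 3 * V * t <= 3 * V ^+ 3 * t.
    nra.
  lra.
have key := @core (Num.sqrt A) (Num.sqrt B) (B - A) (t * g)
  (6 * V ^+ 3 * t ^+ 2) (9 * V ^+ 3 * t) m m0
  ltac:(by rewrite hxA) (sqrtr_ge0 _) (sqrtr_ge0 _) ltac:(by rewrite hyB hxA) hDL hD.
have -> : t ^+ 2 * (g ^+ 2 / (16 * A)) = (t * g) ^+ 2 / (16 * Num.sqrt A ^+ 2).
  by rewrite hxA exprMn mulrA.
apply: le_trans key _.
set K := 6 * V ^+ 3 + (9 * V ^+ 3) ^+ 2 / m.
have eK : 6 * V ^+ 3 * t ^+ 2 + (9 * V ^+ 3 * t) ^+ 2 / m = K * t ^+ 2.
  by rewrite /K; field; rewrite gt_eqF.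
rewrite eK.
have K0 : 0 <= K by rewrite /K addr_ge0 ?divr_ge0 ?mulr_ge0 ?sqr_ge0 ?exprn_ge0 //; lra.
have -> : C * t ^+ 3 = K * t ^+ 2 / (16 * m) * (21 * V ^+ 3 * t).
  by rewrite /C /K; field; rewrite gt_eqF.
have -> : K * t ^+ 2 * (2 * (9 * V ^+ 3 * t) + `|t * g|) / (16 * m)
   = K * t ^+ 2 / (16 * m) * (2 * (9 * V ^+ 3 * t) + `|t * g|).
  by field; rewrite gt_eqF.
apply: ler_wpM2l.
  by rewrite divr_ge0 ?mulr_ge0 ?sqr_ge0 //; lra.
have f2 : 3 * V * t <= 3 * V ^+ 3 * t.
  nra.
lra.
Qed.
End S.

Local Close Scope classical_set_scope.

Theorem lemmaA1 (R : realType) (r v1 v2 : R) :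
  0 < r < 1 ->
  exists C : R, exists delta : R, 0 < delta /\
    forall t : R, 0 < t < delta ->
      `| TQ r (r + v1 * t) (v2 * t) - Gfun r v1 v2 * t ^+ 2 | <= C * t ^+ 3.
Proof. exact: mainlemma. Qed.
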